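(* Let $k\ge 1$. Any unitary circuit composed of Clifford gates and $T$/$T^\dagger$ gates that implements the $(k+1)$-qubit multiply-controlled $Z$ gate $C^kZ = I^{\otimes(k+1)}-2\ket{1\cdots1}\bra{1\cdots1}$ contains at least $2k-2$ gates equal to $T$ or $T^\dagger$.
   Context: Clifford gates are unitaries mapping Pauli operators ($\pm$ tensor products of $I,X,Y,Z$) to Pauli operators under conjugation. $T=\mathrm{diag}(1,e^{i\pi/4})$. *)

(* Defs.v *)
From HB Require Import structures.
From mathcomp Require Import all_boot all_order all_algebra.
From mathcomp Require Import reals.
From mathcomp Require Import complex.
Set Implicit Arguments. Unset Strict Implicit. Unset Printing Implicit Defensive.
Import Order.TTheory GRing.Theory Num.Theory.
Local Open Scope ring_scope.

Section QC.
Variable R : realType.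
Local Notation C := R[i].

(* Computational basis of n qubits: index r : 'I_(2^n); qubit j of r is bit j
   of the binary expansion of r. *)
Definition qbit (n : nat) (r : 'I_(2 ^ n)) (j : 'I_n) : 'I_2 :=
  inord (odd (r %/ 2 ^ j)).

Definition tens (n : nat) (P : 'I_n -> 'M[C]_2) : 'M[C]_(2 ^ n) :=
  \matrix_(r, c) \prod_(j < n) P j (qbit r j) (qbit c j).

Definition adj (m : nat) (A : 'M[C]_m) : 'M[C]_m := (map_mx (@conjc R) A)^T.

Definition unitary (m : nat) (U : 'M[C]_m) : Prop := U *m adj U = 1%:M.

Definition pauliI : 'M[C]_2 := 1%:M.
Definition pauliX : 'M[C]_2 := \matrix_(a, b) (a != b)%:R.
Definition pauliY : 'M[C]_2 :=
  \matrix_(a, b) (if (a == 0) && (b == 1) then - (Complex 0 1)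
                  else if (a == 1) && (b == 0) then Complex 0 1 else 0).
Definition pauliZ : 'M[C]_2 :=
  \matrix_(a, b) (if a == b then (if a == 0 then 1 else -1) else 0).

Definition pauli1 (p : 'I_4) : 'M[C]_2 :=
  match val p with 0 => pauliI | 1 => pauliX | 2 => pauliY | _ => pauliZ end.

Definition is_pauli (n : nat) (A : 'M[C]_(2 ^ n)) : Prop :=
  exists (s : bool) (f : 'I_n -> 'I_4),
    A = (-1) ^+ s *: tens (fun j => pauli1 (f j)).

Definition clifford (n : nat) (U : 'M[C]_(2 ^ n)) : Prop :=
  unitary U /\ forall P, is_pauli P -> is_pauli (U *m P *m adj U).

(* omega = e^{i pi/4} = (1 + i)/sqrt 2 ;  T = diag(1, omega) *)
Definition omega8 : C := Complex (Num.sqrt 2)^-1 (Num.sqrt 2)^-1.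
Definition Tgate : 'M[C]_2 :=
  \matrix_(a, b) (if a == b then (if a == 0 then 1 else omega8) else 0).
Definition Tdgate : 'M[C]_2 := adj Tgate.

Definition on_qubit (n : nat) (j : 'I_n) (G : 'M[C]_2) : 'M[C]_(2 ^ n) :=
  tens (fun i => if i == j then G else 1%:M).

(* A Clifford gate is given as the
   n-qubit Clifford unitary it implements (a Clifford acting on a subset of
   qubits, tensored with identity, is such a unitary). *)
Inductive gate (n : nat) : Type :=
| GCliff of 'M[C]_(2 ^ n)
| GT of 'I_n
| GTdag of 'I_n.

Definition gate_mx (n : nat) (g : gate n) : 'M[C]_(2 ^ n) :=
  match g with
  | GCliff U => U
  | GT j => on_qubit j Tgate
  | GTdag j => on_qubit j Tdgate
  end.

Definition gate_ok (n : nat) (g : gate n) : Prop :=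
  match g with GCliff U => clifford U | _ => True end.

Definition circuit_ok (n : nat) (c : seq (gate n)) : Prop :=
  foldr (fun g P => gate_ok g /\ P) True c.

Definition is_T (n : nat) (g : gate n) : bool :=
  match g with GCliff _ => false | _ => true end.

(* circuit [g1; ...; gm] (g1 applied first) implements gm * ... * g1 *)
Definition circuit_mx (n : nat) (c : seq (gate n)) : 'M[C]_(2 ^ n) :=
  foldl (fun acc g => gate_mx g *m acc) 1%:M c.

Definition T_count (n : nat) (c : seq (gate n)) : nat := count (@is_T n) c.

Definition all_ones (n : nat) (r : 'I_(2 ^ n)) : bool :=
  [forall j : 'I_n, qbit r j == 1].
Definition CkZ (n : nat) : 'M[C]_(2 ^ n) :=
  1%:M - 2%:R *: \matrix_(r, c) ((all_ones r && all_ones c)%:R : C).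

End QC.

(* Main.v *)
Require Import Defs.
From HB Require Import structures.
From mathcomp Require Import all_boot all_order all_algebra.
From mathcomp Require Import reals complex.
From mathcomp Require Import zify ring lra.
Set Implicit Arguments. Unset Strict Implicit. Unset Printing Implicit Defensive.
Import Order.TTheory GRing.Theory Num.Theory.
Lemma bits_inj_nat (n r c : nat) : (r < 2 ^ n)%N -> (c < 2 ^ n)%N ->
  (forall j, (j < n)%N -> odd (r %/ 2 ^ j) = odd (c %/ 2 ^ j)) -> r = c.
Proof.
elim: n r c => [|n IH] r c.
  by rewrite expn0 !ltnS !leqn0 => /eqP -> /eqP ->.
move=> hr hc hb.
have h0 := hb 0%N (ltn0Sn _); rewrite expn0 !divn1 in h0.
have -> : r = (odd r + (r %/ 2).*2)%N by rewrite divn2 odd_double_half.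
have -> : c = (odd c + (c %/ 2).*2)%N by rewrite divn2 odd_double_half.
rewrite h0 (IH (r %/ 2) (c %/ 2)) //.
- by rewrite ltn_divLR // -expnSr.
- by rewrite ltn_divLR // -expnSr.
- move=> j hj; rewrite -!divnMA -expnS; exact: hb.
Qed.

Local Open Scope ring_scope.

Definition qvec (n : nat) (r : 'I_(2 ^ n)) : {ffun 'I_n -> 'I_2} :=
  [ffun j => qbit r j].

Lemma qvec_inj n : injective (@qvec n).
Proof.
move=> r c /ffunP h; apply/val_inj/(@bits_inj_nat n); rewrite ?ltn_ord //.
move=> j hj; have := h (Ordinal hj); rewrite !ffunE /qbit.
by move/(congr1 val); rewrite /= !inordK //; case: odd; case: odd.
Qed.

Lemma qvec_bij n : bijective (@qvec n).
Proof.
apply: inj_card_bij; first exact: qvec_inj.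
by rewrite card_ffun !card_ord.
Qed.

Section S.
Variable R : realType.
Local Notation C := R[i].
Local Notation "x %:C" := (real_complex _ x) (format "x %:C").
Let s := Num.sqrt (2 : R).
Lemma sum_qvec n (F : {ffun 'I_n -> 'I_2} -> C) :
  \sum_(m < 2 ^ n) F (qvec m) = \sum_f F f.
Proof. by rewrite (reindex (@qvec n)) //; apply: onW_bij; exact: qvec_bij. Qed.

Lemma tens_mul n (P Q : 'I_n -> 'M[C]_2) :
  tens P *m tens Q = tens (fun j => P j *m Q j).
Proof.
apply/matrixP => r c; rewrite !mxE.
under eq_bigr do rewrite !mxE -big_split /=.
under [RHS]eq_bigr do rewrite mxE.
rewrite bigA_distr_bigA /= -sum_qvec.
by apply: eq_bigr => m _; apply: eq_bigr => j _; rewrite ffunE.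
Qed.

Lemma tens_trace n (P : 'I_n -> 'M[C]_2) :
  \tr (tens P) = \prod_j \tr (P j).
Proof.
rewrite /mxtrace /tens.
transitivity (\sum_(i < 2 ^ n) \prod_j P j (qvec i j) (qvec i j)).
  by apply: eq_bigr => i _; rewrite mxE; apply: eq_bigr => j _; rewrite ffunE.
rewrite (sum_qvec (fun f => \prod_j P j (f j) (f j))).
by rewrite (bigA_distr_bigA (fun j b => P j b b)).
Qed.

Lemma adj_mul m (A B : 'M[C]_m) : adj (A *m B) = adj B *m adj A.
Proof. by rewrite /adj map_mxM trmx_mul. Qed.

Lemma adj1 m : adj (1%:M : 'M[C]_m) = 1%:M.
Proof.
apply/matrixP => i j; rewrite !mxE eq_sym; case: eqP => _ /=.
  exact: conjc1. exact: conjc0.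
Qed.

Lemma adj_tens n (P : 'I_n -> 'M[C]_2) :
  adj (tens P) = tens (fun j => adj (P j)).
Proof.
apply/matrixP => r c; rewrite /adj /tens !mxE rmorph_prod.
by apply: eq_bigr => j _; rewrite !mxE.
Qed.

Lemma tens_slot n (j : 'I_n) (P : 'I_n -> 'M[C]_2) (x y : C) (A B : 'M[C]_2) :
  tens (fun i => if i == j then x *: A + y *: B else P i) =
  x *: tens (fun i => if i == j then A else P i) +
  y *: tens (fun i => if i == j then B else P i).
Proof.
apply/matrixP => r c; rewrite /tens !mxE.
rewrite (bigD1 j) //= (bigD1 j (P := predT)) //= (bigD1 j (P := predT)) //= !eqxx !mxE.
rewrite mulrDl !mulrA.
by congr (_ * _ * _ + _ * _ * _); apply: eq_bigr => i /negPf ->.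
Qed.
Lemma s_sq : s * s = 2. Proof. by rewrite -expr2 sqr_sqrtr. Qed.
Lemma s_neq0 : s != 0. Proof. by rewrite sqrtr_eq0 -ltNge. Qed.

Lemma omega8E : omega8 R = Complex (s / 2) (s / 2).
Proof.
have h : s^-1 = s / 2.
  apply: (mulfI s_neq0). rewrite mulfV ?s_neq0 //. by rewrite mulrA s_sq mulfV // pnatr_eq0.
by rewrite /omega8 -/s h.
Qed.

Lemma s_cube : s * s * s = 2 * s. Proof. by rewrite s_sq. Qed.
Lemma c0E : (0 : C) = Complex 0 0. Proof. by []. Qed.
Lemma c1E : (1 : C) = Complex 1 0. Proof. by []. Qed.
Lemma sinv : s^-1 = s / 2.
Proof. by apply: (mulfI s_neq0); rewrite mulfV ?s_neq0 // mulrA s_sq mulfV // pnatr_eq0. Qed.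

Definition s2 : C := Complex s 0.

Ltac mx2 := apply/matrixP; case => -[|[|//]] ?; case => -[|[|//]] ?;
  rewrite /Tdgate /adj /pauliI /s2 -/s;
  do 4 rewrite ?mxE ?big_ord_recr ?big_ord0 /= ?add0r;
  rewrite ?omega8E -/s ?sinv ?c0E ?c1E; simpc;
  try by [];
  congr Complex; have h2 := s_sq; have h3 := s_cube; nra.

Lemma TIT : s2 *: (Tgate R *m pauliI R *m adj (Tgate R)) = s2 *: pauliI R + 0 *: pauliI R.
Proof. mx2. Qed.
Lemma TXT : s2 *: (Tgate R *m pauliX R *m adj (Tgate R)) = 1 *: pauliX R + 1 *: pauliY R.
Proof. mx2. Qed.
Lemma TYT : s2 *: (Tgate R *m pauliY R *m adj (Tgate R)) = 1 *: pauliY R + (-1) *: pauliX R.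
Proof. mx2. Qed.
Lemma TZT : s2 *: (Tgate R *m pauliZ R *m adj (Tgate R)) = s2 *: pauliZ R + 0 *: pauliZ R.
Proof. mx2. Qed.
Lemma TdIT : s2 *: (Tdgate R *m pauliI R *m adj (Tdgate R)) = s2 *: pauliI R + 0 *: pauliI R.
Proof. mx2. Qed.
Lemma TdXT : s2 *: (Tdgate R *m pauliX R *m adj (Tdgate R)) = 1 *: pauliX R + (-1) *: pauliY R.
Proof. mx2. Qed.
Lemma TdYT : s2 *: (Tdgate R *m pauliY R *m adj (Tdgate R)) = 1 *: pauliY R + 1 *: pauliX R.
Proof. mx2. Qed.
Lemma TdZT : s2 *: (Tdgate R *m pauliZ R *m adj (Tdgate R)) = s2 *: pauliZ R + 0 *: pauliZ R.
Proof. mx2. Qed.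
Definition Zs2 (x : C) : Prop :=
  exists a b : int, x = (a%:~R + b%:~R * s)%:C.

Lemma Zs2_0 : Zs2 0. Proof. by exists 0, 0; rewrite !mul0r addr0. Qed.
Lemma Zs2_1 : Zs2 1. Proof. by exists 1, 0; rewrite mul0r addr0. Qed.
Lemma Zs2_s2 : Zs2 s2. Proof. by exists 0, 1; rewrite mul1r add0r. Qed.
Lemma Zs2_D x y : Zs2 x -> Zs2 y -> Zs2 (x + y).
Proof.
move=> [a [b ->]] [c [d ->]]; exists (a + c), (b + d).
by rewrite -rmorphD /= !intrD; congr (_ %:C); ring.
Qed.
Lemma Zs2_N x : Zs2 x -> Zs2 (- x).
Proof.
move=> [a [b ->]]; exists (- a), (- b).
by rewrite -rmorphN /= !intrN; congr (_ %:C); ring.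
Qed.
Lemma Zs2_M x y : Zs2 x -> Zs2 y -> Zs2 (x * y).
Proof.
move=> [a [b ->]] [c [d ->]]; exists (a * c + 2 * b * d), (a * d + b * c).
rewrite -rmorphM /= !intrD !intrM; congr (_ %:C).
rewrite (_ : (2 : int)%:~R = s * s); last by rewrite s_sq.
ring.
Qed.
Lemma Zs2_sign (b : bool) : Zs2 ((-1) ^+ b).
Proof. by case: b; rewrite ?expr1 ?expr0; [apply: Zs2_N|]; apply: Zs2_1. Qed.
Lemma Zs2_X x k : Zs2 x -> Zs2 (x ^+ k).
Proof. by move=> h; elim: k => [|k IH]; [exact: Zs2_1| rewrite exprS; exact: Zs2_M]. Qed.


Definition Pf n (f : 'I_n -> 'I_4) : 'M[C]_(2 ^ n) := tens (fun j => pauli1 R (f j)).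

Inductive span n : 'M[C]_(2 ^ n) -> Prop :=
| sp0 : span 0
| spD A B : span A -> span B -> span (A + B)
| spP x f : Zs2 x -> span (x *: Pf f).

Lemma spanZ n x (A : 'M[C]_(2 ^ n)) : Zs2 x -> span A -> span (x *: A).
Proof.
move=> hx; elim=> [|B D _ hB _ hD|y f hy].
- by rewrite scaler0; exact: sp0.
- by rewrite scalerDr; exact: spD.
- by rewrite scalerA; apply: spP; exact: Zs2_M.
Qed.

Lemma span_conj n a (G : 'M[C]_(2 ^ n))
  (H : forall f, span (s2 ^+ a *: (G *m Pf f *m adj G))) A :
  span A -> span (s2 ^+ a *: (G *m A *m adj G)).
Proof.
elim=> [|B D _ hB _ hD|y f hy].
- by rewrite mulmx0 mul0mx scaler0; exact: sp0.
- by rewrite mulmxDr mulmxDl scalerDr; exact: spD.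
- rewrite -scalemxAr -scalemxAl scalerA mulrC -scalerA.
  exact: spanZ.
Qed.

Lemma cliff_span n (G : 'M[C]_(2 ^ n)) : clifford G ->
  forall f, span (s2 ^+ 0 *: (G *m Pf f *m adj G)).
Proof.
move=> [_ hG] f.
have [b [g ->]] : is_pauli (G *m Pf f *m adj G).
  by apply: hG; exists false, f; rewrite expr0 scale1r.
rewrite expr0 scale1r; apply: spP; exact: Zs2_sign.
Qed.

Lemma eq_tens n (P Q : 'I_n -> 'M[C]_2) : (forall i, P i = Q i) -> tens P = tens Q.
Proof.
by move=> h; apply/matrixP => r c; rewrite !mxE; apply: eq_bigr => i _; rewrite h.
Qed.

Lemma tens_scale_slot n (j : 'I_n) (P : 'I_n -> 'M[C]_2) (x : C) (A : 'M[C]_2) :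
  x *: tens (fun i => if i == j then A else P i) =
  tens (fun i => if i == j then x *: A else P i).
Proof.
rewrite -[x *: A]addr0 -[0 : 'M_2](scale0r A) tens_slot.
by rewrite scale0r addr0.
Qed.

Definition pI : 'I_4 := @Ordinal 4 0 isT.
Definition pX : 'I_4 := @Ordinal 4 1 isT.
Definition pY : 'I_4 := @Ordinal 4 2 isT.
Definition pZ : 'I_4 := @Ordinal 4 3 isT.

Lemma T_span n (j : 'I_n) (G1 : 'M[C]_2)
  (H : forall a : 'I_4, exists x y (b c : 'I_4), [/\ Zs2 x, Zs2 y &
       s2 *: (G1 *m pauli1 R a *m adj G1) = x *: pauli1 R b + y *: pauli1 R c])
  f : span (s2 ^+ 1 *: (on_qubit j G1 *m Pf f *m adj (on_qubit j G1))).
Proof.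
rewrite /on_qubit /Pf adj_tens !tens_mul expr1.
rewrite (@eq_tens _ _ (fun i => if i == j then G1 *m pauli1 R (f j) *m adj G1
                                else pauli1 R (f i))); last first.
  move=> i; case: eqP => [->|_] //.
  by rewrite mul1mx adj1 mulmx1.
have [x [y [b [c [hx hy E]]]]] := H (f j).
rewrite tens_scale_slot E tens_slot.
apply: spD.
- rewrite (_ : tens _ = Pf (fun i => if i == j then b else f i)); first exact: spP.
  by apply: eq_tens => i; case: eqP.
- rewrite (_ : tens _ = Pf (fun i => if i == j then c else f i)); first exact: spP.
  by apply: eq_tens => i; case: eqP.
Qed.

Lemma Tg_H : forall a : 'I_4, exists x y (b c : 'I_4), [/\ Zs2 x, Zs2 y &
       s2 *: (Tgate R *m pauli1 R a *m adj (Tgate R)) = x *: pauli1 R b + y *: pauli1 R c].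
Proof.
case=> -[|[|[|[|//]]]] ?; rewrite /pauli1 /=.
- by exists s2, 0, pI, pI; split; [exact: Zs2_s2 | exact: Zs2_0 | exact: TIT].
- by exists 1, 1, pX, pY; split; [exact: Zs2_1 | exact: Zs2_1 | exact: TXT].
- by exists 1, (-1), pY, pX; split; [exact: Zs2_1 | exact: Zs2_N Zs2_1 | exact: TYT].
- by exists s2, 0, pZ, pZ; split; [exact: Zs2_s2 | exact: Zs2_0 | exact: TZT].
Qed.

Lemma Tdg_H : forall a : 'I_4, exists x y (b c : 'I_4), [/\ Zs2 x, Zs2 y &
       s2 *: (Tdgate R *m pauli1 R a *m adj (Tdgate R)) = x *: pauli1 R b + y *: pauli1 R c].
Proof.
case=> -[|[|[|[|//]]]] ?; rewrite /pauli1 /=.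
- by exists s2, 0, pI, pI; split; [exact: Zs2_s2 | exact: Zs2_0 | exact: TdIT].
- by exists 1, (-1), pX, pY; split; [exact: Zs2_1 | exact: Zs2_N Zs2_1 | exact: TdXT].
- by exists 1, 1, pY, pX; split; [exact: Zs2_1 | exact: Zs2_1 | exact: TdYT].
- by exists s2, 0, pZ, pZ; split; [exact: Zs2_s2 | exact: Zs2_0 | exact: TdZT].
Qed.

Lemma circuit_ok_rcons n (c : seq (gate R n)) g :
  circuit_ok (rcons c g) -> circuit_ok c /\ gate_ok g.
Proof. by elim: c => [|h c IH] /= [H1 H2] //; have [? ?] := IH H2. Qed.

Lemma invariant n (c : seq (gate R n)) (f : 'I_n -> 'I_4) : circuit_ok c ->
  span (s2 ^+ T_count c *: (circuit_mx c *m Pf f *m adj (circuit_mx c))).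
Proof.
elim/last_ind: c => [|c g IH] /=.
  by rewrite /circuit_mx /= adj1 mul1mx mulmx1 expr0 scale1r -[Pf f]scale1r; move=> _; apply: spP; exact: Zs2_1.
move/circuit_ok_rcons => [hc hg].
rewrite /circuit_mx foldl_rcons -/(circuit_mx c) adj_mul !mulmxA.
rewrite /T_count -cats1 count_cat -/(T_count c) /= addn0 exprD -scalerA.
rewrite (_ : _ *: (_ *: _) = s2 ^+ is_T g *: (gate_mx g *m (s2 ^+ T_count c *:
   (circuit_mx c *m Pf f *m adj (circuit_mx c))) *m adj (gate_mx g))); last first.
  by rewrite !scalemxAl !mulmxA -scalemxAr scalemxAl.
apply: span_conj (IH hc).
case: g hg => [U|j|j] /= hg.
- exact: cliff_span.
- exact: T_span Tg_H.
- exact: T_span Tdg_H.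
Qed.



Lemma pauli_tr (a b : 'I_4) :
  \tr (pauli1 R a *m pauli1 R b) = 2 * (a == b)%:R.
Proof.
case: a => -[|[|[|[|//]]]] ?; case: b => -[|[|[|[|//]]]] ?;
rewrite /pauli1 /= /mxtrace /pauliI;
do 3 rewrite ?mxE ?big_ord_recr ?big_ord0 /= ?add0r;
rewrite ?c0E ?c1E; simpc; try by []; by rewrite addNr.
Qed.

Lemma span_tr n (q : 'I_n -> 'I_4) (A : 'M[C]_(2 ^ n)) :
  span A -> exists z, Zs2 z /\ \tr (Pf q *m A) = 2 ^+ n * z.
Proof.
elim=> [|B D _ [z1 [h1 e1]] _ [z2 [h2 e2]]|x f hx].
- by exists 0; split; [exact: Zs2_0| rewrite mulmx0 mxtrace0 mulr0].
- exists (z1 + z2); split; first exact: Zs2_D.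
  by rewrite mulmxDr mxtraceD e1 e2 mulrDr.
- exists (x * \prod_j ((q j == f j)%:R)); split.
    apply: Zs2_M => //; apply: big_ind => //; [exact: Zs2_1| exact: Zs2_M|].
    by move=> j _; case: eqP => _; [exact: Zs2_1 | exact: Zs2_0].
  rewrite -scalemxAr mxtraceZ /Pf tens_mul tens_trace.
  under eq_bigr do rewrite pauli_tr.
  by rewrite big_split /= prodr_const card_ord mulrCA.
Qed.
Lemma numeric (t m : nat) (a b : int) :
  s ^+ t = 2 ^+ m * (a%:~R + b%:~R * s) -> (2 * m <= t)%N.
Proof.
move=> E; rewrite leqNgt; apply/negP => ht.
have tE : t = (odd t + (t./2).*2)%N by rewrite odd_double_half.
set u := t./2 in tE; set e := odd t in tE.
have hu : (u < m)%N by lia.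
have Et : s ^+ t = 2 ^+ u * s ^+ e.
  by rewrite tE exprD -mul2n exprM expr2 s_sq mulrC.
have Em : (2 : R) ^+ m = 2 ^+ u * (2 * (2 ^ (m - u).-1)%N%:R).
  rewrite -natrX -natrM -natrX -natrM -expnS prednK ?subn_gt0 //.
  by rewrite -expnD subnKC // ltnW.
rewrite (_ : ((2 ^ (m - u).-1)%N%:R : R) = ((2 ^ (m - u).-1)%N%:Z)%:~R) // in Em.
set ci : int := ((2 ^ (m - u).-1)%N%:Z) in Em.
rewrite Et Em -mulrA in E.
have h2 : (2:R) != 0 by rewrite pnatr_eq0.
move/(mulfI (expf_neq0 u h2)) : E => {Et Em}.
clearbody e ci; case: e tE => tE /= E.
  rewrite expr1 in E.
  have h : s * (1 - 2 * ci%:~R * b%:~R) = 2 * ci%:~R * a%:~R.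
    rewrite mulrBr mulr1 {1}E; ring.
  have hz : (((2 * ci * a)^+2)%:~R : R) = (2 * (1 - 2*ci*b)^+2)%:~R.
    rewrite !(rmorphXn, rmorphB, rmorphM, rmorph1, rmorph_nat) /= -h exprMn sqr_sqrtr ?ler0n //; ring.
  move/eqP: hz; rewrite eqr_int => /eqP hz; lia.
rewrite expr0 in E.
have h : 1 - 2 * ci%:~R * a%:~R = 2 * ci%:~R * b%:~R * s.
  rewrite {1}E; ring.
have hz : (((1 - 2 * ci * a)^+2)%:~R : R) = (2 * (2*ci*b)^+2)%:~R.
  rewrite !(rmorphXn, rmorphB, rmorphM, rmorph1, rmorph_nat) /= h exprMn sqr_sqrtr ?ler0n //; ring.
move/eqP: hz; rewrite eqr_int => /eqP hz; lia.
Qed.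
Lemma numeric2 (t k : nat) (a b : int) :
  s ^+ t * (-4 * (-1) ^+ k.+1) = 2 ^+ k.+2 * (a%:~R + b%:~R * s) -> (2 * k <= t)%N.
Proof.
move=> E; apply: (@numeric t k ((-1) ^+ k * a) ((-1) ^+ k * b)).
rewrite !intrM rmorphXn rmorphN rmorph1 /=.
rewrite !exprS in E.
move: E; rewrite -signr_odd; case: (odd k); rewrite ?expr1 ?expr0 => E; lra.
Qed.
Lemma ones_ex n : exists o : 'I_(2 ^ n),
  (forall j, qbit o j = 1) /\ forall r, all_ones r = (r == o).
Proof.
have [g gK Kg] := qvec_bij n.
exists (g [ffun _ => 1]); split.
  by move=> j; have := congr1 (fun h : {ffun 'I_n -> 'I_2} => h j) (Kg [ffun _ => 1]); rewrite !ffunE.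
move=> r; apply/forallP/eqP => [h|->].
  rewrite -[r]gK; congr g; apply/ffunP => j; rewrite !ffunE; exact/eqP.
by move=> j; have := congr1 (fun h : {ffun 'I_n -> 'I_2} => h j) (Kg [ffun _ => 1]); rewrite !ffunE => ->.
Qed.

Lemma tens_oo n (P : 'I_n -> 'M[C]_2) (o : 'I_(2 ^ n)) :
  (forall j, qbit o j = 1) -> tens P o o = \prod_j P j 1 1.
Proof. by move=> h; rewrite mxE; apply: eq_bigr => j _; rewrite h. Qed.

Lemma mul_delta_r m (A : 'M[C]_m) o r c :
  (A *m delta_mx o o) r c = A r o * (c == o)%:R.
Proof.
rewrite mxE (bigD1 o) //= big1 ?addr0 => [|l /negbTE hl]; rewrite !mxE ?eqxx ?hl //.
by rewrite mulr0.
Qed.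

Lemma mul_delta_l m (A : 'M[C]_m) o r c :
  (delta_mx o o *m A) r c = (r == o)%:R * A o c.
Proof.
rewrite mxE (bigD1 o) //= big1 ?addr0 => [|l /negbTE hl]; rewrite !mxE ?eqxx ?hl //.
  by rewrite andbT.
by rewrite andbF mul0r.
Qed.

Lemma tr_delta m (A : 'M[C]_m) o : \tr (A *m delta_mx o o) = A o o.
Proof.
rewrite /mxtrace (bigD1 o) //= big1 ?addr0 => [|l /negbTE hl]; rewrite mul_delta_r ?eqxx ?mulr1 //.
by rewrite hl mulr0.
Qed.

Lemma tr_dPd m (Q P : 'M[C]_m) o :
  \tr (Q *m delta_mx o o *m P *m delta_mx o o) = Q o o * P o o.
Proof.
rewrite tr_delta mxE (bigD1 o) //= big1 ?addr0 => [|l /negbTE hl]; rewrite mul_delta_r ?eqxx ?mulr1 //.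
by rewrite hl mulr0 mul0r.
Qed.


Lemma XX11 : (pauliX R *m pauliX R) 1 1 = 1.
Proof. by rewrite mxE !big_ord_recr big_ord0 /= !mxE /= !(add0r, addr0, mul0r, mulr0, mul1r, mulr1). Qed.
Lemma IZ11 : (pauliI R *m pauliZ R) 1 1 = -1.
Proof. by rewrite mxE !big_ord_recr big_ord0 /= !mxE /= !(add0r, addr0, mul0r, mulr0, mul1r, mulr1). Qed.
Lemma ZI11 : (pauliZ R *m pauliI R) 1 1 = -1.
Proof. by rewrite mxE !big_ord_recr big_ord0 /= !mxE /= !(add0r, addr0, mul0r, mulr0, mul1r, mulr1). Qed.
Lemma X11 : pauliX R 1 1 = 0.
Proof. by rewrite mxE. Qed.

Definition fp n (j : 'I_n.+1) : 'I_4 := if j == ord0 then pX else pI.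
Definition fq n (j : 'I_n.+1) : 'I_4 := if j == ord0 then pX else pZ.

Lemma lift0_neq n (i : 'I_n) : (lift ord0 i == ord0 :> 'I_n.+1) = false.
Proof. by apply/negbTE; rewrite eq_sym neq_lift. Qed.

Lemma CkZ_tr k :
  \tr (Pf (@fq k.+1) *m (CkZ R k.+2 *m Pf (@fp k.+1) *m adj (CkZ R k.+2)))
  = -4 * (-1) ^+ k.+1.
Proof.
have [o [ho hE]] := ones_ex k.+2.
set D : 'M[C]_(2 ^ k.+2) := delta_mx o o.
have CE : CkZ R k.+2 = 1%:M - 2%:R *: D.
  rewrite /CkZ; congr (_ - _ *: _); apply/matrixP => r c; rewrite !mxE !hE.
  by [].
have adjC : adj (CkZ R k.+2) = CkZ R k.+2.
  rewrite CE; apply/matrixP => r c; rewrite !mxE rmorphB rmorphM !rmorph_nat.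
  by rewrite eq_sym andbC.
rewrite adjC CE.
set Q := Pf _; set P := Pf _.
rewrite !(mulmxBl, mulmxBr, mul1mx, mulmx1) -!scalemxAl -!scalemxAr.
rewrite !(mxtraceD, raddfB, raddfN, mxtraceZ) /= opprK !mxtraceZ.
have t1 : \tr (Q *m P) = 0.
  rewrite /Q /P /Pf tens_mul tens_trace (bigD1 (lift ord0 ord0)) //=.
  by rewrite pauli_tr /fp /fq lift0_neq /= mulr0 mul0r.
have hPQ : (P *m Q) o o = (-1) ^+ k.+1.
  rewrite /P /Q /Pf tens_mul tens_oo // big_ord_recl /fp /fq eqxx /pauli1 /= XX11 mul1r.
  by rewrite (eq_bigr (fun _ => -1)) ?prodr_const ?card_ord // => i _; exact: IZ11.
have hQP : (Q *m P) o o = (-1) ^+ k.+1.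
  rewrite /P /Q /Pf tens_mul tens_oo // big_ord_recl /fp /fq eqxx /pauli1 /= XX11 mul1r.
  by rewrite (eq_bigr (fun _ => -1)) ?prodr_const ?card_ord // => i _; exact: ZI11.
have hP : P o o = 0.
  by rewrite /P /Pf tens_oo // big_ord_recl /fp eqxx /pauli1 /= X11 mul0r.
have h2 : \tr (Q *m (D *m P)) = (P *m Q) o o.
  by rewrite mulmxA mxtrace_mulC mulmxA tr_delta.
have h3 : \tr (Q *m (P *m D)) = (Q *m P) o o.
  by rewrite mulmxA tr_delta.
have h4 : \tr (Q *m (D *m P *m D)) = 0.
  by rewrite !mulmxA tr_dPd hP mulr0.
rewrite t1 h2 h3 h4 hPQ hQP; ring.
Qed.

Lemma main_sec (k : nat) (hk : (1 <= k)%N) (c : seq (gate R k.+1)) :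
  circuit_ok c -> circuit_mx c = CkZ R k.+1 -> (2 * k - 2 <= T_count c)%N.
Proof.
case: k hk c => // k _ c hc hC.
have inv := invariant (@fp k.+1) hc.
rewrite hC in inv.
have [z [[a [b ez]] E]] := span_tr (@fq k.+1) inv.
rewrite -scalemxAr mxtraceZ CkZ_tr ez in E.
have L : (s ^+ T_count c * (-4 * (-1) ^+ k.+1))%:C = s2 ^+ T_count c * (-4 * (-1) ^+ k.+1).
  by rewrite rmorphM rmorphXn rmorphM rmorphN rmorphXn rmorphN rmorph1 (rmorph_nat _ 4).
have Rr : (2 ^+ k.+2 * (a%:~R + b%:~R * s))%:C = 2 ^+ k.+2 * (a%:~R + b%:~R * s)%:C.
  by rewrite rmorphM rmorphXn (rmorph_nat _ 2).
have E' : s ^+ T_count c * (-4 * (-1) ^+ k.+1) = 2 ^+ k.+2 * (a%:~R + b%:~R * s).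
  by apply: complexI; rewrite L Rr.
have := numeric2 E'; lia.
Qed.
End S.

Theorem mainTheorem12 (R : realType) (k : nat) (hk : (1 <= k)%N)
    (c : seq (gate R k.+1)) :
  circuit_ok c ->
  circuit_mx c = CkZ R k.+1 ->
  (2 * k - 2 <= T_count c)%N.
Proof. exact: main_sec. Qed.
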